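(* For every integer $n\ge 1$, the unitary group $\mathfrak U(n)$ of $n\times n$ complex unitary matrices, as a compact group with its normalized Haar measure, has a dense subgroup that is not Haar measurable. *)

(* Defs.v *)
From HB Require Import structures.
From mathcomp Require Import all_boot all_order all_algebra.
From mathcomp Require Import all_classical all_reals.
From mathcomp Require Import ereal topology normedtype sequences measure.
From mathcomp Require Import complex.

Set Implicit Arguments.
Unset Strict Implicit.
Unset Printing Implicit Defensive.

Import Order.TTheory GRing.Theory Num.Theory.
Local Open Scope classical_set_scope.
Local Open Scope ring_scope.

Section UnitaryHaar.
Variables (R : realType) (n : nat).

Local Notation M := 'M[R[i]]_n.

Definition adjmx (A : M) : M := (map_mx (@Num.conj _) A)^T.

Definition unitary_set : set M := [set A | A *m adjmx A = 1%:M].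

Definition is_subgroup_U (H : set M) : Prop :=
  [/\ H `<=` unitary_set, H 1%:M,
      (forall A B, H A -> H B -> H (A *m B)) &
      (forall A, H A -> H (invmx A))].

(* Entrywise closeness: the (usual Euclidean) topology of M ~ C^(n*n). *)
Definition mx_close (e : R) (A B : M) : Prop :=
  forall i j, `|A i j - B i j| < (e%:C)%C.

Definition open_in_U (S : set M) : Prop :=
  S `<=` unitary_set /\
  forall A, S A -> exists2 e : R, 0 < e &
    forall B, unitary_set B -> mx_close e A B -> S B.

Definition dense_in_U (H : set M) : Prop :=
  forall A, unitary_set A -> forall e : R, 0 < e ->
    exists2 B, H B & mx_close e A B.

Definition borel_U : set (set M) := <<s unitary_set, open_in_U >>.

Definition haar_measure_U (mu : set M -> \bar R) : Prop :=
  [/\ mu set0 = 0%E,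
      (forall E, borel_U E -> (0 <= mu E)%E),
      (forall F : nat -> set M, (forall k, borel_U (F k)) ->
         trivIset setT F ->
         (fun m => \sum_(k < m) mu (F k))%E @ \oo --> mu (\bigcup_k F k)),
      mu unitary_set = 1%E &
      (forall g E, unitary_set g -> borel_U E ->
         mu [set g *m x | x in E] = mu E)].

(* S is measurable for (the completion of) the Haar measure mu *)
Definition haar_measurable (mu : set M -> \bar R) (S : set M) : Prop :=
  exists B1 B2, [/\ borel_U B1, borel_U B2, B1 `<=` S, S `<=` B2 &
                    mu (B2 `\` B1) = 0%E].

End UnitaryHaar.

(* Main.v *)
Require Import Defs.
From HB Require Import structures.
From mathcomp Require Import all_boot all_order all_algebra.
From mathcomp Require Import all_classical all_reals.
From mathcomp Require Import ereal topology normedtype sequences measure.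
From mathcomp Require Import complex trigo pi_irrational.
From mathcomp Require Import ring lra.
Set Implicit Arguments.
Unset Strict Implicit.
Unset Printing Implicit Defensive.
Import Order.TTheory GRing.Theory Num.Theory.
Import numFieldNormedType.Exports.
Local Open Scope classical_set_scope.
Local Open Scope ring_scope.
Definition qclosed (R : realType) (A : set R) :=
  (forall x y, A x -> A y -> A (x + y)) /\ (forall (q : rat) x, A x -> A (ratr q * x)).

Lemma pi_not_q (R : realType) (q : rat) : 1 <> ratr q * (pi : R).
Proof.
move=> h; have := @pi_irrationnal R; apply.
have q0 : q != 0.
  by apply/eqP => q0; move: h; rewrite q0 rmorph0 mul0r; apply/eqP; exact: oner_neq0.
exists q^-1 => //.
have rq0 : ratr q != 0 :> R by rewrite fmorph_eq0.
by rewrite fmorphV; apply: (mulfI rq0); rewrite mulfV.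
Qed.

Lemma exists_V (R : realType) : exists V : set R,
  [/\ qclosed V, V pi, ~ V 1 & forall x, exists2 a, V a & exists q : rat, x = a + ratr q].
Proof.
pose P (A : set R) := [/\ qclosed A, ~ A 1 & forall x, A x -> A pi].
have chainP : forall F : set (set R), F `<=` P -> total_on F subset ->
    P (\bigcup_(X in F) X).
  move=> F FP Ftot; split.
  - split.
    + move=> x y [X FX Xx] [Y FY Yy].
      have [XY|YX] := Ftot X Y FX FY.
      * exists Y => //; have [[Yadd _] _ _] := FP Y FY; apply: Yadd => //; exact: XY.
      * exists X => //; have [[Xadd _] _ _] := FP X FX; apply: Xadd => //; exact: YX.
    + move=> q x [X FX Xx]; exists X => //.
      by have [[_ Xsc] _ _] := FP X FX; apply: Xsc.
  - by move=> [X FX X1]; have [_ + _] := FP X FX; apply.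
  - move=> x [X FX Xx]; exists X => //.
    by have [_ _ Xpi] := FP X FX; exact: Xpi Xx.
have [A [[[Aadd Asc] A1 Api] Amax]] := Zorn_bigcup chainP.
pose W := [set y : R | exists q : rat, y = ratr q * pi].
have Ane : exists x, A x.
  apply: contrapT => Ae.
  apply: (Amax W).
    split; first by move=> x Ax; exfalso; apply: Ae; exists x.
    move=> WA; apply: Ae; exists pi; apply: WA; exists 1; by rewrite rmorph1 mul1r.
  split.
  - split.
    + by move=> _ _ [q ->] [q' ->]; exists (q + q'); rewrite rmorphD mulrDl.
    + by move=> r _ [q ->]; exists (r * q); rewrite rmorphM mulrA.
  - by move=> [q /pi_not_q].
  - by move=> _ _; exists 1; rewrite rmorph1 mul1r.
have Api' : A pi by case: Ane => x /Api.
have A0 : A 0 by have := Asc 0 _ Api'; rewrite rmorph0 mul0r.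
exists A; split => //.
move=> x; have [Ax|nAx] := pselect (A x).
  by exists x => //; exists 0; rewrite rmorph0 addr0.
pose A' := [set y : R | exists a (q : rat), A a /\ y = a + ratr q * x].
have : ~ P A'.
  move=> PA'; apply: (Amax A').
    split.
      by move=> y Ay; exists y, 0; rewrite rmorph0 mul0r addr0.
    by move=> A'A; apply: nAx; apply: A'A; exists 0, 1; rewrite rmorph1 mul1r add0r.
  exact: PA'.
have A'P : ~ A' 1 -> P A'.
  move=> nA'1; split => //.
  - split.
    + move=> _ _ [a [q [Aa ->]]] [b [r [Ab ->]]].
      exists (a + b), (q + r); split; first exact: Aadd.
      by rewrite rmorphD mulrDl addrACA.
    + move=> s _ [a [q [Aa ->]]]; exists (ratr s * a), (s * q); split; first exact: Asc.
      by rewrite mulrDr rmorphM mulrA.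
  - by move=> _ _; exists pi, 0; split => //; rewrite rmorph0 mul0r addr0.
move=> nPA'; have : A' 1 by apply: contrapT => h; exact: nPA' (A'P h).
move=> [a [q [Aa e1]]].
have q0 : q != 0.
  apply/eqP => q0; apply: A1; move: e1; rewrite q0 rmorph0 mul0r addr0 => ->; exact Aa.
have rq0 : ratr q != 0 :> R by rewrite fmorph_eq0.
exists (ratr (- q^-1) * a); first exact: Asc.
exists q^-1.
rewrite rmorphN !fmorphV.
have -> : x = (1 - a) / ratr q by rewrite e1 addrAC subrr add0r mulrAC divff // mul1r.
rewrite mulrBl mul1r mulNr addrC [a * _]mulrC.
done.
Qed.
Local Open Scope complex_scope.
Definition expi (R : realType) (t : R) : R[i] := (cos t +i* sin t)%C.

Lemma expiD (R : realType) (s t : R) : expi (s + t) = expi s * expi t.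
Proof.
rewrite /expi sinD cosD /= [RHS]/GRing.mul /=.
by congr (_ +i* _); rewrite addrC.
Qed.

Lemma expi0 (R : realType) : expi (0 : R) = 1.
Proof. by rewrite /expi cos0 sin0. Qed.

Lemma expiN (R : realType) (t : R) : expi (- t) * expi t = 1.
Proof. by rewrite -expiD addNr expi0. Qed.

Lemma expi_unit (R : realType) (t : R) : expi t * Num.conj (expi t) = 1.
Proof.
rewrite /expi [LHS]/GRing.mul /=.
have h := cos2Dsin2 t.
congr (_ +i* _).
- by rewrite -h mulrN opprK !expr2.
- by rewrite mulrN mulrC addNr.
Qed.

Lemma expi_surj (R : realType) (z : R[i]) : z * Num.conj z = 1 -> exists t, z = expi t.
Proof.
case: z => a b; rewrite [LHS]/GRing.mul /= => -[h _].
have h2 : a ^+ 2 + b ^+ 2 = 1 by rewrite -h mulrN opprK !expr2.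
have ha : -1 <= a <= 1 by apply/andP; split; nra.
have [b0|b0] := leP 0 b.
  exists (acos a); rewrite /expi acosK ?inE //= sin_acos // -h2 addrAC subrr add0r.
  by rewrite sqrtr_sqr ger0_norm.
exists (- acos a); rewrite /expi cosN sinN acosK ?inE //= sin_acos // -h2 addrAC subrr add0r.
by rewrite sqrtr_sqr ltr0_norm ?opprK.
Qed.

Lemma expi2pi (R : realType) : expi (pi *+ 2 : R) = 1.
Proof. by rewrite /expi cos2pi sin2pi. Qed.

Lemma expiN1 (R : realType) (x : R) : expi x = 1 -> expi (- x) = 1.
Proof. by move=> h; rewrite -[LHS]mulr1 -h expiN. Qed.

Lemma expi_int (R : realType) (k : int) : expi (k%:~R * (pi *+ 2) : R) = 1.
Proof.
have hn : forall m : nat, expi ((pi *+ 2 : R) *+ m) = 1.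
  by elim=> [|m IH]; rewrite ?mulr0n ?expi0 // mulrS expiD IH expi2pi mulr1.
case: k => m; first by rewrite mulr_natl hn.
by rewrite NegzE mulNr mulr_natl; apply: expiN1; apply: hn.
Qed.

Lemma expi_eq1 (R : realType) (t : R) : expi t = 1 -> exists k : int, t = k%:~R * (pi *+ 2).
Proof.
move=> ht.
have p2 : 0 < pi *+ 2 :> R by rewrite pmulrn_rgt0 // pi_gt0.
pose k := Num.floor (t / (pi *+ 2)).
exists k.
pose s := t - k%:~R * (pi *+ 2).
have es : expi s = 1 by rewrite /s expiD ht mul1r; apply: expiN1; apply: expi_int.
have cs : cos s = 1 by move: es; rewrite /expi => -[].
have [kl ku] : (k%:~R <= t / (pi *+ 2)) /\ (t / (pi *+ 2) < (k + 1)%:~R).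
  by split; [exact: Num.Theory.floor_le | exact: Num.Theory.floorD1_gt].
have tE : t = (t / (pi *+ 2)) * (pi *+ 2) by rewrite divfK // lt0r_neq0.
move: ku; rewrite intrD => ku.
have [s0 s2] : 0 <= s /\ s < pi *+ 2.
  rewrite /s tE; move: kl ku p2; set u := t / _; set P := pi *+ 2; set kk := (k%:~R : R).
  move=> kl ku p2; split; nra.
suff : s = 0 by rewrite /s => /eqP; rewrite subr_eq0 => /eqP.
have [sp|ps] := leP s pi.
  apply: cos_inj; rewrite ?in_itv /= ?s0 ?sp ?lexx ?pi_ge0 // cs cos0 //.
exfalso.
have : pi *+ 2 - s = 0.
  apply: cos_inj; rewrite ?in_itv /= ?lexx ?pi_ge0 //.
  - by apply/andP; split; move: s2 ps; set P := pi; rewrite mulr2n => ? ?; lra.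
  - rewrite cos0 -cs -cosN opprB cosB cos2pi sin2pi mulr1 mulr0 addr0 //.
have : 0 < pi *+ 2 - s by rewrite subr_gt0.
by move=> /gt_eqF /eqP.
Qed.

Lemma expi_cont (R : realType) (t e : R) : 0 < e ->
  exists2 d, 0 < d & forall s, `|s - t| < d -> `|expi s - expi t| < e%:C.
Proof.
move=> e0.
have e20 : 0 < e ^+ 2 / 2 by rewrite divr_gt0 // exprn_gt0.
have hcc := @continuous_cos R 0.
have [d /= d0 hd] := cvgr_dist_lt _ _ hcc _ e20.

exists d => // s hs.
have := hd (s - t); rewrite /ball_ /= sub0r normrN => /(_ hs).
rewrite cos0 => h1.
rewrite normc_def ltcR.
have -> : e = Num.sqrt (e ^+ 2) by rewrite sqrtr_sqr gtr0_norm.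
rewrite ltr_sqrt ?exprn_gt0 //= cosB in h1 *.
have hc := cos2Dsin2 s; have hc' := cos2Dsin2 t.
have h2 := ler_norm (1 - (cos s * cos t + sin s * sin t)).
rewrite !expr2 in hc hc' h1 e20 *.
move: hc hc' h1 h2 e20; set a := cos s; set b := cos t; set c := sin s; set f := sin t.
set ee := e * e => hc hc' h1 h2 e20.
lra.
Qed.

Section Mat.
Variables (R : realType) (n : nat).
Local Notation M := 'M[R[i]]_n.
Local Notation U := (@unitary_set R n).

Lemma adjmxM (A B : M) : adjmx (A *m B) = adjmx B *m adjmx A.
Proof. by rewrite /adjmx (map_mxM Num.Def.conjC) trmx_mul. Qed.

Lemma adjmxK (A : M) : adjmx (adjmx A) = A.
Proof.
rewrite /adjmx map_trmx trmxK -map_mx_comp; apply: map_mx_id => x /=.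
exact: conjCK.
Qed.

Lemma adjmx1 : adjmx (1%:M : M) = 1%:M.
Proof. by rewrite /adjmx (map_mx1 Num.Def.conjC) trmx1. Qed.

Lemma det_adjmx (A : M) : \det (adjmx A) = Num.conj (\det A).
Proof. by rewrite /adjmx det_tr (det_map_mx Num.Def.conjC). Qed.

Lemma unitaryC (A : M) : U A -> adjmx A *m A = 1%:M.
Proof. by move=> h; apply: mulmx1C. Qed.

Lemma unitary1 : U 1%:M.
Proof. by rewrite /unitary_set /= adjmx1 mulmx1. Qed.

Lemma unitaryM (A B : M) : U A -> U B -> U (A *m B).
Proof.
move=> hA hB; rewrite /unitary_set /= adjmxM mulmxA -[A *m B *m _]mulmxA.
by rewrite hB mulmx1 hA.
Qed.

Lemma invmx_unitary (A : M) : U A -> invmx A = adjmx A.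
Proof.
move=> hA; have [Au _] := mulmx1_unit hA.
by rewrite -[RHS](mulKmx Au) hA mulmx1.
Qed.

Lemma unitaryV (A : M) : U A -> U (invmx A).
Proof.
move=> hA; rewrite invmx_unitary // /unitary_set /= adjmxK; exact: unitaryC.
Qed.

Lemma unitary_det (A : M) : U A -> \det A * Num.conj (\det A) = 1.
Proof. by move=> hA; rewrite -det_adjmx -det_mulmx hA det1. Qed.

End Mat.

Section Mat2.
Variables (R : realType) (n : nat).
Local Notation M := 'M[R[i]]_n.
Local Notation U := (@unitary_set R n).

Lemma adjmxE (A : M) i j : adjmx A i j = Num.conj (A j i).
Proof. by rewrite /adjmx !mxE. Qed.

Lemma unitary_entry (A : M) i j : U A -> `|A i j| <= 1.
Proof.
move=> hA.
have e : \sum_k `|A i k| ^+ 2 = 1.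
  have := congr1 (fun B : M => B i i) hA; rewrite !mxE eqxx /= => h.
  apply: (etrans _ h).
  by apply: eq_bigr => k _; rewrite adjmxE normCK.
have : `|A i j| ^+ 2 <= 1.
  rewrite -e (bigD1 j) //= lerDl; apply: sumr_ge0 => k _; exact: exprn_ge0.
by rewrite expr_le1.
Qed.

Definition Dg (i0 : 'I_n) (c : R[i]) : M :=
  diag_mx (\row_j (if j == i0 then c else 1)).

Lemma mulmx_DgE (A : M) i0 c i j :
  (A *m Dg i0 c) i j = A i j * (if j == i0 then c else 1).
Proof. by rewrite /Dg mul_mx_diag !mxE. Qed.

Lemma det_Dg i0 c : \det (Dg i0 c) = c.
Proof.
rewrite /Dg det_diag (bigD1 i0) //= mxE eqxx big1 ?mulr1 // => j /negPf hj.
by rewrite mxE hj.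
Qed.

Lemma unitary_Dg i0 c : c * Num.conj c = 1 -> U (Dg i0 c).
Proof.
move=> hc; rewrite /unitary_set /=; apply/matrixP => i j.
rewrite !mxE (bigD1 i) //= big1 ?addr0; last first.
  by move=> k /negPf hk; rewrite /Dg !mxE (eq_sym i k) hk mulr0n mul0r.
rewrite /adjmx /Dg !mxE eqxx mulr1n.
have [->|hij] := eqVneq i j.
  rewrite !mulr1n; case: (j == i0) => //.
  by rewrite rmorph1 mulr1.
by rewrite !mulr0n rmorph0 mulr0.
Qed.

End Mat2.

Lemma conj_expi (R : realType) (t : R) : Num.conj (expi t) = expi (- t).
Proof. by rewrite /expi cosN sinN. Qed.

Lemma norm_expi (R : realType) (t : R) : `|expi t| = 1.
Proof. by rewrite normc_def /= cos2Dsin2 sqrtr1. Qed.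

Lemma expiNr (R : realType) (t : R) : expi t * expi (- t) = 1.
Proof. by rewrite mulrC expiN. Qed.

Definition Hset (R : realType) (n : nat) (V : set R) : set 'M[R[i]]_n :=
  [set A | unitary_set A /\ exists2 v, V v & \det A = expi v].

Lemma Hsub (R : realType) (n : nat) (V : set R) :
  qclosed V -> V pi -> is_subgroup_U (@Hset R n V).
Proof.
move=> [Vadd Vsc] Vpi.
have V0 : V 0 by have := Vsc 0 _ Vpi; rewrite rmorph0 mul0r.
split.
- by move=> A [].
- split; first exact: unitary1.
  by exists 0 => //; rewrite det1 expi0.
- move=> A B [hA [v Vv dA]] [hB [w Vw dB]]; split; first exact: unitaryM.
  by exists (v + w); [exact: Vadd | rewrite det_mulmx dA dB expiD].
- move=> A [hA [v Vv dA]]; split; first exact: unitaryV.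
  exists (- v); first by have := Vsc (-1) _ Vv; rewrite rmorphN rmorph1 mulN1r.
  rewrite det_inv dA; apply: (@mulIf _ (expi v)).
    by apply/eqP => h; have := norm_expi v; rewrite h normr0 => /eqP; rewrite eq_sym oner_eq0.
  by rewrite mulVf ?expiN //; apply/eqP => h; have := norm_expi v; rewrite h normr0 => /eqP; rewrite eq_sym oner_eq0.
Qed.

Lemma Hdense (R : realType) (n : nat) (V : set R) (i0 : 'I_n) :
  (forall q : rat, V (ratr q * pi)) -> dense_in_U (@Hset R n V).
Proof.
move=> Vq A hA e e0.
have [t dA] := expi_surj (unitary_det hA).
have [d d0 hd] := expi_cont t e0.
have pi0 : 0 < pi :> R := pi_gt0 R.
have ltp : (t - d) / pi < (t + d) / pi.
  by rewrite ltr_pM2r ?invr_gt0 //; lra.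
have [q] := rat_in_itvoo ltp.
rewrite in_itv /= ltr_pdivrMr // ltr_pdivlMr // => /andP [q1 q2].
set v : R := ratr q * pi.
have hv : `|v - t| < d by rewrite /v ltr_norml; apply/andP; split; lra.
pose c := expi v * expi (- t).
exists (A *m Dg i0 c).
  split.
    apply: unitaryM => //; apply: unitary_Dg.
    by rewrite /c -expiD expi_unit.
  by exists v; [exact: Vq | rewrite det_mulmx det_Dg dA /c mulrCA expiNr mulr1].
move=> i j; rewrite mulmx_DgE.
have [_|_] := eqVneq j i0; last first.
  by rewrite mulr1 subrr normr0 ltcR.
have -> : A i j - A i j * c = A i j * ((expi t - expi v) * expi (- t)).
  by rewrite /c mulrBl expiNr mulrBr mulr1.
rewrite normrM normrM norm_expi mulr1.
apply: (le_lt_trans (ler_piMl _ (unitary_entry _ _ hA))) => //.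
by rewrite distrC; exact: hd.
Qed.

Section Borel.
Variables (R : realType) (n : nat).
Local Notation M := 'M[R[i]]_n.
Local Notation U := (@unitary_set R n).
Local Notation B := (@borel_U R n).

Lemma unitaryV_adj (g : M) : U g -> U (adjmx g).
Proof. by move=> hg; rewrite /unitary_set /= adjmxK; exact: unitaryC. Qed.

Lemma mx_close_mul (g A C : M) (e : R) : 0 < e -> U g ->
  mx_close (e / (n%:R + 1)) A C -> mx_close e (g *m A) (g *m C).
Proof.
move=> e0 hg hAC i j.
have N0 : 0 < n%:R + 1 :> R by rewrite ltr_wpDl.
set y := e / (n%:R + 1).
have y0 : 0 < y by rewrite divr_gt0.
have yN : y *+ n < e.
  have h : y * (n%:R + 1) = e by rewrite /y divfK // lt0r_neq0.
  by rewrite -mulr_natr; move: h y0; set N := (n%:R : R) => h y0; nra.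
have -> : (g *m A) i j - (g *m C) i j = (g *m (A - C)) i j by rewrite mulmxBr !mxE.

rewrite mxE.
apply: (le_lt_trans (ler_norm_sum _ _ _)).
apply: (@le_lt_trans _ _ (\sum_(k < n) y%:C)).
  apply: ler_sum => k _; rewrite normrM.
  apply: (le_trans (ler_piMl _ (unitary_entry _ _ hg))) => //.
  rewrite !mxE; apply: ltW; exact: hAC.
by rewrite sumr_const card_ord -rmorphMn ltcR.
Qed.

Lemma open_translate (g : M) S : U g -> open_in_U S -> open_in_U [set g *m x | x in S].
Proof.
move=> hg [SU So]; split.
  by move=> _ [x Sx <-]; apply: unitaryM => //; exact: SU.
move=> _ [x Sx <-].
have [e e0 he] := So x Sx.
have N0 : 0 < n%:R + 1 :> R by rewrite ltr_wpDl.
exists (e / (n%:R + 1)); first by rewrite divr_gt0.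
move=> C hC hxC.
exists (adjmx g *m C).
  apply: he; first by apply: unitaryM => //; exact: unitaryV_adj.
  have := mx_close_mul e0 (unitaryV_adj hg) hxC.
  by rewrite mulmxA unitaryC // mul1mx.
by rewrite mulmxA hg mul1mx.
Qed.

Lemma borel_sub E : B E -> E `<=` U.
Proof.
move=> hE.
have sP : sigma_algebra U [set A : set M | A `<=` U].
  split => //.
  - by move=> A _; apply: subDsetl.
  - by move=> F hF x [k _ Fx]; exact: hF Fx.
have oP : (@open_in_U R n) `<=` [set A : set M | A `<=` U] by move=> S [].
exact: (smallest_sub sP oP hE).
Qed.

Lemma mulmx_inj (g : M) : U g -> injective (fun x : M => g *m x).
Proof.
move=> hg x y /= h.
by rewrite -[x]mul1mx -[y]mul1mx -(unitaryC hg) -!mulmxA h.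
Qed.

Lemma borel_translate (g : M) E : U g -> B E -> B [set g *m x | x in E].
Proof.
move=> hg hE.
pose P := [set E : set M | E `<=` U /\ B [set g *m x | x in E]].
suff : P E by case.
have oP : (@open_in_U R n) `<=` P.
  move=> S hS; split; first by case: hS.
  by apply: sub_sigma_algebra; exact: open_translate.
have sP : sigma_algebra U P.
  split.
  - split => //; rewrite image_set0; exact: sigma_algebra0.
  - move=> A [AU hA]; split; first exact: subDsetl.
    have -> : [set g *m x | x in U `\` A] = U `\` [set g *m x | x in A].
      apply/seteqP; split.
        move=> _ [x [Ux nAx] <-]; split; first exact: unitaryM.
        by move=> [a Aa /mulmx_inj] => /(_ hg) ax; apply: nAx; rewrite -ax.
      move=> y [Uy nAy]; exists (adjmx g *m y).
        split; first by apply: unitaryM => //; exact: unitaryV_adj.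
        by move=> Ax; apply: nAy; exists (adjmx g *m y) => //; rewrite mulmxA hg mul1mx.
      by rewrite mulmxA hg mul1mx.
    exact: sigma_algebraCD.
  - move=> F hF; split.
      by move=> x [k _ Fx]; have [+ _] := hF k; apply.
    rewrite image_bigcup; apply: sigma_algebra_bigcup => k.
    by have [_ ?] := hF k.
exact: (smallest_sub sP oP hE).
Qed.

End Borel.

Section Haar.
Variables (R : realType) (n : nat) (mu : set 'M[R[i]]_n -> \bar R).
Hypothesis hmu : haar_measure_U mu.
Local Notation M := 'M[R[i]]_n.
Local Notation U := (@unitary_set R n).
Local Notation B := (@borel_U R n).

Lemma bor0 : B set0.
Proof. exact: sigma_algebra0. Qed.

Lemma borU2 A C : B A -> B C -> B (A `|` C).
Proof.
move=> hA hC; rewrite -bigcup2E; apply: sigma_algebra_bigcup => k /=.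
by case: ifP => // _; case: ifP => // _; exact: bor0.
Qed.

Lemma borD A C : B A -> B C -> B (A `\` C).
Proof.
move=> hA hC.
have -> : A `\` C = U `\` ((U `\` A) `|` C).
  apply/seteqP; split.
    move=> x [Ax nCx]; split; first exact: borel_sub hA _ Ax.
    by move=> [[_ ?]|?].
  move=> x [Ux h]; split.
    by apply: contrapT => nAx; apply: h; left.
  by move=> Cx; apply: h; right.
apply: sigma_algebraCD; apply: borU2 => //; exact: sigma_algebraCD.
Qed.

Lemma mu_ge0 A : B A -> (0 <= mu A)%E.
Proof. by case: hmu => _ h _ _ _; exact: h. Qed.

Lemma mu_cvg (F : nat -> set M) : (forall k, B (F k)) -> trivIset setT F ->
  (fun m => \sum_(k < m) mu (F k))%E @ \oo --> mu (\bigcup_k F k).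
Proof. by case: hmu => _ _ h _ _; exact: h. Qed.

Lemma mu_sum_le (F : nat -> set M) : (forall k, B (F k)) -> trivIset setT F ->
  forall m, (\sum_(k < m) mu (F k) <= mu (\bigcup_k F k))%E.
Proof.
move=> hF tF m; apply: (cvge_to_ge (mu_cvg hF tF)).
exists m => // k /= hk.
rewrite -(subnKC hk) big_split_ord /= leeDl //.
by apply: sume_ge0 => i _; exact: mu_ge0.
Qed.

Lemma mu_sum_ge (F : nat -> set M) (b : \bar R) : (forall k, B (F k)) -> trivIset setT F ->
  (forall m, (\sum_(k < m) mu (F k) <= b)%E) -> (mu (\bigcup_k F k) <= b)%E.
Proof.
move=> hF tF hb; apply: (cvge_to_le (mu_cvg hF tF)).
by exists 0%N => // k _; exact: hb.
Qed.

Lemma mu_add A C : B A -> B C -> A `&` C = set0 -> mu (A `|` C) = (mu A + mu C)%E.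
Proof.
move=> hA hC AC.
have hF : forall k, B (bigcup2 A C k).
  by move=> k /=; case: ifP => // _; case: ifP => // _; exact: bor0.
have tF : trivIset setT (bigcup2 A C) by rewrite -trivIset_bigcup2.
have e2 : forall m, (2 <= m)%N -> (\sum_(k < m) mu (bigcup2 A C k) = mu A + mu C)%E.
  move=> m hm; rewrite -(subnKC hm) big_split_ord /=.
  rewrite [X in (_ + X)%E]big1; last by move=> i _; case: hmu.
  by rewrite adde0 !big_ord_recr /= big_ord0 add0e.
rewrite -bigcup2E; apply/eqP; rewrite eq_le; apply/andP; split.
  apply: mu_sum_ge => // m.
  apply: (@le_trans _ _ (\sum_(k < m.+2) mu (bigcup2 A C k))%E); last by rewrite e2.
  rewrite -addn2 big_split_ord /= leeDl //.
  by apply: sume_ge0 => i _; exact: mu_ge0 (hF _).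
by rewrite -(e2 2%N) //; exact: mu_sum_le.
Qed.

Lemma mu_le A C : B A -> B C -> A `<=` C -> (mu A <= mu C)%E.
Proof.
move=> hA hC AC.
have -> : C = A `|` (C `\` A).
  by apply/seteqP; split => x; [move=> Cx; have [?|?] := pselect (A x); [left|right] | case=> [/AC|[]]].
have hCA : B (C `\` A) by exact: borD.
rewrite mu_add //; first by rewrite leeDl // mu_ge0.
by apply/seteqP; split => // x [? []].
Qed.

End Haar.

Section Cosets.
Variables (R : realType) (n : nat) (V : set R) (i0 : 'I_n).
Hypotheses (Vcl : qclosed V) (Vpi : V pi) (V1 : ~ V 1)
  (Vdec : forall x, exists2 a, V a & exists q : rat, x = a + ratr q).
Local Notation M := 'M[R[i]]_n.
Local Notation U := (@unitary_set R n).
Local Notation H := (@Hset R n V).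

Definition gq (q : rat) : M := Dg i0 (expi (ratr q)).

Lemma gq_unitary q : U (gq q).
Proof. by apply: unitary_Dg; exact: expi_unit. Qed.

Lemma gq_cover A : U A -> exists q, exists2 x, H x & A = gq q *m x.
Proof.
move=> hA; have [t dA] := expi_surj (unitary_det hA).
have [a Va [q tE]] := Vdec t.
exists q, (adjmx (gq q) *m A); last by rewrite mulmxA gq_unitary mul1mx.
split; first by apply: unitaryM => //; apply: unitaryV_adj; exact: gq_unitary.
exists a => //.
rewrite det_mulmx det_adjmx /gq det_Dg conj_expi dA tE -expiD.
by congr expi; rewrite addrC -addrA subrr addr0.
Qed.

Lemma V0 : V 0.
Proof. by case: Vcl => _ Vsc; have := Vsc 0 _ Vpi; rewrite rmorph0 mul0r. Qed.

Lemma VN x : V x -> V (- x).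
Proof. by case: Vcl => _ Vsc Vx; have := Vsc (-1) _ Vx; rewrite rmorphN rmorph1 mulN1r. Qed.

Lemma gq_disj q r x y : H x -> H y -> gq q *m x = gq r *m y -> q = r.
Proof.
case: Vcl => Vadd Vsc.
move=> [_ [v Vv dx]] [_ [w Vw dy]] e.
have := congr1 determinant e; rewrite !det_mulmx /gq !det_Dg dx dy -!expiD => e2.
have e3 : expi ((ratr q + v) - (ratr r + w)) = 1.
  by rewrite expiD e2 -expiD subrr expi0.
have [k hk] := expi_eq1 e3.
have Vd : V (ratr (q - r)).
  have -> : ratr (q - r) = k%:~R * (pi *+ 2) + w - v :> R.
    by rewrite -hk rmorphB /=; lra.
  apply: (Vadd); last exact: VN.
  apply: (Vadd) => //.
  have -> : k%:~R * (pi *+ 2) = ratr (k%:~R * 2) * pi :> R.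
    by rewrite rmorphM /= ratr_int rmorph_nat mulr2n; ring.
  exact: Vsc.
have [//|qr] := eqVneq q r; exfalso; apply: V1.
have qr0 : q - r != 0 by rewrite subr_eq0.
have := Vsc (q - r)^-1 _ Vd; rewrite -rmorphM mulVf // rmorph1; exact.
Qed.

End Cosets.

Section NonMeas.
Variables (R : realType) (n : nat) (V : set R) (i0 : 'I_n).
Hypotheses (Vcl : qclosed V) (Vpi : V pi) (V1 : ~ V 1)
  (Vdec : forall x, exists2 a, V a & exists q : rat, x = a + ratr q).
Variable (mu : set 'M[R[i]]_n -> \bar R).
Hypothesis hmu : haar_measure_U mu.
Local Notation M := 'M[R[i]]_n.
Local Notation U := (@unitary_set R n).
Local Notation H := (@Hset R n V).
Local Notation B := (@borel_U R n).
Local Notation g := (@gq R n i0).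

Lemma mu_inv q E : B E -> mu [set g q *m x | x in E] = mu E.
Proof. by case: hmu => _ _ _ _ h; apply: h; exact: (gq_unitary R i0). Qed.

Lemma borU : B U.
Proof. by rewrite -(setD0 U); apply: sigma_algebraCD; exact: bor0. Qed.

Lemma muU : mu U = 1%E.
Proof. by case: hmu. Qed.

Lemma H_nonmeas : ~ haar_measurable mu H.
Proof.
move=> [B1 [B2 [hB1 hB2 B1H HB2 m0]]].
have mB2 : mu B2 = mu B1.
  have -> : B2 = B1 `|` (B2 `\` B1).
    apply/seteqP; split => x; last by case=> [/B1H/HB2|[]].
    by move=> B2x; have [?|?] := pselect (B1 x); [left|right].
  rewrite (mu_add hmu) //; first by rewrite m0 adde0.
  - exact: borD.
  - by apply/seteqP; split => // x [? []].
have [c0|c0] := eqVneq (mu B1) 0%E.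
-
  pose r (k : nat) : rat := odflt 0 (unpickle k).
  pose G k := [set g (r k) *m x | x in B2].
  have hG : forall k, B (G k) by move=> k; apply: borel_translate => //; exact: (gq_unitary R i0).
  have mG : forall k, mu (G k) = 0%E by move=> k; rewrite mu_inv // mB2.
  pose D k := G k `\` \bigcup_j (if (j < k)%N then G j else set0).
  have hD : forall k, B (D k).
    move=> k; apply: borD => //; apply: sigma_algebra_bigcup => j.
    by case: ifP => _; [exact: hG | exact: bor0].
  have mD : forall k, mu (D k) = 0%E.
    move=> k; apply/eqP; rewrite eq_le (mu_ge0 hmu) // andbT -(mG k).
    by apply: (mu_le hmu (hD k) (hG k)) => x [].
  have tD : trivIset setT D.
    move=> i j _ _ [x [[Gix nix] [Gjx njx]]].
    have [ij|ji|//] := ltngtP i j.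
      by exfalso; apply: njx; exists i => //; rewrite ij.
    by exfalso; apply: nix; exists j => //; rewrite ji.
  have UD : U `<=` \bigcup_k D k.
    move=> A hA.
    have [q [x Hx ->]] := gq_cover i0 Vdec hA.
    have exG : exists k, `[< G k (g q *m x) >].
      exists (pickle q); apply/asboolP; exists x; first exact: HB2.
      by rewrite /r pickleK.
    case: (ex_minnP exG) => k /asboolP Gk kmin.
    exists k => //; split => // -[j jk]; case: ifP => // jlt Gj.
    have := kmin j (asboolT Gj); rewrite leqNgt jlt //.
  have : (mu U <= mu (\bigcup_k D k))%E.
    apply: (mu_le hmu) => //; first exact: borU.
    exact: sigma_algebra_bigcup.
  rewrite muU.
  have : (mu (\bigcup_k D k) <= 0)%E.
    apply: (mu_sum_ge hmu) => // m; rewrite big1 // => k _; exact: mD.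
  move=> h1 h2; have := le_trans h2 h1; by rewrite lee_fin ler10.
-
  pose F (k : nat) := [set g k%:R *m x | x in B1].
  have hF : forall k, B (F k) by move=> k; apply: borel_translate => //; exact: (gq_unitary R i0).
  have mF : forall k, mu (F k) = mu B1 by move=> k; rewrite mu_inv.
  have tF : trivIset setT F.
    move=> i j _ _ [y [[x Bx ex] [x' Bx' ex']]].
    have := gq_disj Vcl Vpi V1 (B1H _ Bx) (B1H _ Bx') (etrans ex (esym ex')).
    by move/eqP; rewrite eqr_nat => /eqP.
  have FU : \bigcup_k F k `<=` U.
    by apply: borel_sub; exact: sigma_algebra_bigcup.
  have bF : B (\bigcup_k F k) by exact: sigma_algebra_bigcup.
  have hle : forall m : nat, (mu B1 *+ m <= 1)%E.
    move=> m; rewrite -muU.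
    apply: (le_trans _ (mu_le hmu bF borU FU)).
    apply: (le_trans _ (mu_sum_le hmu hF tF m)).
    by under eq_bigr do rewrite mF; rewrite sumr_const card_ord.
  have m1ge0 := mu_ge0 hmu hB1.
  move: c0 m1ge0 hle; case: (mu B1) => [s| |] //= s0 s_ge0 hle.
  - have sp : 0 < s.
      by rewrite lt_neqAle eq_sym -lee_fin s_ge0 andbT; apply: contra s0 => /eqP ->.
    have := hle (Num.truncn s^-1).+1; rewrite -EFin_natmul lee_fin.
    have := truncnS_gt s^-1; set N := ((Num.truncn s^-1).+1)%:R => hN.
    rewrite -mulr_natr => h.
    have : s * s^-1 < s * N by rewrite ltr_pM2l.
    by rewrite divff ?gt_eqF //; lra.
  - by have := hle 1%N.
Qed.

End NonMeas.

Theorem mainTheorem2 (R : realType) (n : nat) (hn : (1 <= n)%N) :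
  exists H : set 'M[R[i]]_n,
    [/\ is_subgroup_U H, dense_in_U H &
        forall mu, haar_measure_U mu -> ~ haar_measurable mu H].
Proof.
have [V [Vcl Vpi V1 Vdec]] := exists_V R.
pose i0 : 'I_n := Ordinal hn.
exists (@Hset R n V); split.
- exact: Hsub.
- apply: (Hdense i0) => q; case: Vcl => _ Vsc; exact: Vsc.
- by move=> mu hmu; exact: (H_nonmeas i0 Vcl Vpi V1 Vdec hmu).
Qed.
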